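(* For every formula $\varphi$ of $\mathcal L^{\bigcirc}_\square$ the following are equivalent: (i) $\varphi$ is derivable in $\mathbf{GLH}$; (ii) $\varphi$ is valid on every finite invertible dynamic $\mathbf{GL}$ frame; (iii) $\varphi$ is valid, with respect to the $d$-semantics, on every invertible dynamic topological system $\langle X,\tau,f\rangle$ with $X$ finite and $\langle X,\tau\rangle$ scattered.
   Context: Language $\mathcal L^{\bigcirc}_\square$: $\varphi::= p\mid \varphi\wedge\varphi\mid\neg\varphi\mid\square\varphi\mid\bigcirc\varphi$, $p$ ranging over a fixed non-empty set $\mathsf{PV}$. Axioms and rules: Taut; K: $\square(\varphi\to\psi)\to(\square\varphi\to\square\psi)$; 4: $\square\varphi\to\square\square\varphi$; L: $\square(\square\varphi\to\varphi)\to\square\varphi$; ${\rm Next}_\neg$: $\neg\bigcirc\varphi\leftrightarrow\bigcirc\neg\varphi$; ${\rm Next}_\wedge$: $\bigcirc(\varphi\wedge\psi)\leftrightarrow\bigcirc\varphi\wedge\bigcirc\psi$; H: $\square\bigcirc\varphi\leftrightarrow\bigcirc\square\varphi$; rules modus ponens, ${\rm Nec}_\square$, ${\rm Nec}_\bigcirc$. $\mathbf{GLH}$ is axiomatised by Taut, K, 4, L, ${\rm Next}_\neg$, ${\rm Next}_\wedge$, H, closed under these rules. An invertible dynamic $\mathbf{GL}$ frame is $\langle W,\sqsubset,f\rangle$ with $W$ non-empty, $\sqsubset$ transitive and converse well-founded (for finite $W$: transitive and irreflexive), and $f\colon W\to W$ a bijection such that $w\sqsubset v$ iff $f(w)\sqsubset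 f(v)$. Kripke truth: $w\models\square\varphi$ iff $v\models\varphi$ for all $v$ with $w\sqsubset v$; $w\models\bigcirc\varphi$ iff $f(w)\models\varphi$. A space is scattered if for every $S\subseteq X$, $S\subseteq d(S)$ implies $S=\varnothing$, where $d(A)$ is the set of $x$ in the closure of $A\setminus\{x\}$. An invertible DTS is $\langle X,\tau,f\rangle$ with $f$ a homeomorphism. $d$-semantics: $\|p\|=\nu(p)$, Boolean clauses set-theoretic, $\|\square\varphi\|=X\setminus d(\|\neg\varphi\|)$, $\|\bigcirc\varphi\|=f^{-1}(\|\varphi\|)$. Validity means truth everywhere under every valuation. *)

(* Defs.v *)
From mathcomp Require Import all_boot.
Set Implicit Arguments. Unset Strict Implicit. Unset Printing Implicit Defensive.

Inductive form (PV : Type) : Type :=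
| Var : PV -> form PV
| And : form PV -> form PV -> form PV
| Neg : form PV -> form PV
| Box : form PV -> form PV
| Next : form PV -> form PV.
Arguments Var {PV} _.
Arguments And {PV} _ _.
Arguments Neg {PV} _.
Arguments Box {PV} _.
Arguments Next {PV} _.

Definition Imp {PV} (a b : form PV) : form PV := Neg (And a (Neg b)).
Definition Iff {PV} (a b : form PV) : form PV := And (Imp a b) (Imp b a).

(* ---------- Tautologies: true under every Boolean valuation of formulas
   (i.e. treating variables, □-formulas and ○-formulas as atoms);
   these are exactly the substitution instances of propositional tautologies ---------- *)
Definition bool_val {PV} (v : form PV -> bool) : Prop :=
  (forall a b, v (And a b) = v a && v b) /\ (forall a, v (Neg a) = ~~ v a).

Definition taut {PV} (phi : form PV) : Prop :=
  forall v : form PV -> bool, bool_val v -> v phi = true.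

Inductive GLH {PV : Type} : form PV -> Prop :=
| GLH_taut phi : taut phi -> GLH phi
| GLH_K phi psi : GLH (Imp (Box (Imp phi psi)) (Imp (Box phi) (Box psi)))
| GLH_4 phi : GLH (Imp (Box phi) (Box (Box phi)))
| GLH_L phi : GLH (Imp (Box (Imp (Box phi) phi)) (Box phi))
| GLH_Next_neg phi : GLH (Iff (Neg (Next phi)) (Next (Neg phi)))
| GLH_Next_and phi psi : GLH (Iff (Next (And phi psi)) (And (Next phi) (Next psi)))
| GLH_H phi : GLH (Iff (Box (Next phi)) (Next (Box phi)))
| GLH_MP phi psi : GLH (Imp phi psi) -> GLH phi -> GLH psi
| GLH_Nec_box phi : GLH phi -> GLH (Box phi)
| GLH_Nec_next phi : GLH phi -> GLH (Next phi).

Fixpoint ksat {PV} {W : Type} (R : W -> W -> bool) (f : W -> W)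
  (V : PV -> W -> bool) (w : W) (phi : form PV) : Prop :=
  match phi with
  | Var p => V p w = true
  | And a b => ksat R f V w a /\ ksat R f V w b
  | Neg a => ~ ksat R f V w a
  | Box a => forall v, R w v -> ksat R f V v a
  | Next a => ksat R f V (f w) a
  end.

Definition fin_inv_dyn_GL_frame (W : finType) (R : rel W) (f : W -> W) : Prop :=
  (0 < #|W|)%N /\ transitive R /\ irreflexive R /\ bijective f /\
  (forall w v, R w v = R (f w) (f v)).

Definition kvalid {PV} (W : finType) (R : rel W) (f : W -> W) (phi : form PV) : Prop :=
  forall (V : PV -> W -> bool) (w : W), ksat R f V w phi.

Definition is_topology (X : finType) (op : pred {set X}) : Prop :=
  op set0 /\ op setT /\
  (forall A B, op A -> op B -> op (A :&: B)) /\
  (forall F : {set {set X}}, (forall A, A \in F -> op A) -> op (\bigcup_(A in F) A)).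

Definition tclosure (X : finType) (op : pred {set X}) (A : {set X}) : {set X} :=
  [set x | [forall U : {set X}, (op U && (x \in U)) ==> [exists y, (y \in U) && (y \in A)]]].

Definition derived (X : finType) (op : pred {set X}) (A : {set X}) : {set X} :=
  [set x | x \in tclosure op (A :\ x)].

Definition scattered (X : finType) (op : pred {set X}) : Prop :=
  forall S : {set X}, S \subset derived op S -> S = set0.

Definition homeomorphism (X : finType) (op : pred {set X}) (f : X -> X) : Prop :=
  bijective f /\ (forall U, op U -> op (f @^-1: U)) /\ (forall U, op U -> op (f @: U)).

Fixpoint dsem {PV} (X : finType) (op : pred {set X}) (f : X -> X)
  (nu : PV -> {set X}) (phi : form PV) : {set X} :=
  match phi with
  | Var p => nu p
  | And a b => dsem op f nu a :&: dsem op f nu b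
  | Neg a => ~: dsem op f nu a
  | Box a => ~: derived op (~: dsem op f nu a)
  | Next a => f @^-1: dsem op f nu a
  end.

Definition dvalid {PV} (X : finType) (op : pred {set X}) (f : X -> X) (phi : form PV) : Prop :=
  forall nu : PV -> {set X}, dsem op f nu phi = setT.

(* Main.v *)
Require Import Defs.
From mathcomp Require Import all_boot.
From Stdlib Require Import ClassicalEpsilon. From Stdlib Require List.
Set Implicit Arguments. Unset Strict Implicit. Unset Printing Implicit Defensive.
Notation In := List.In.


Definition asb (P : Prop) : bool := if excluded_middle_informative P then true else false.
Lemma asbP (P : Prop) : asb P = true <-> P.
Proof. rewrite /asb; case: excluded_middle_informative => //. Qed.

Ltac taut_solve :=
  rewrite /taut /Imp /Iff; let v := fresh "v" in let Ha := fresh "Ha" in let Hn := fresh "Hn" in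
  move=> v [Ha Hn]; rewrite ?Ha ?Hn; rewrite ?Ha ?Hn; rewrite ?Ha ?Hn; rewrite ?Ha ?Hn;
  rewrite ?Ha ?Hn; rewrite ?Ha ?Hn;
  repeat match goal with |- context [v ?x] => case: (v x) end; done.

Section Der.
Context {PV : Type}.
Implicit Types a b c d : form PV.


Lemma tmp a b : taut (Imp a b) -> GLH a -> GLH b.
Proof. move=> /GLH_taut H1 H2; exact: GLH_MP H1 H2. Qed.

Lemma tmp2 a b c : taut (Imp a (Imp b c)) -> GLH a -> GLH b -> GLH c.
Proof. move=> /GLH_taut H1 H2 H3; exact: GLH_MP (GLH_MP H1 H2) H3. Qed.

Lemma imp_trans a b c : GLH (Imp a b) -> GLH (Imp b c) -> GLH (Imp a c).
Proof. apply: tmp2; taut_solve. Qed.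

Lemma iff_trans a b c : GLH (Iff a b) -> GLH (Iff b c) -> GLH (Iff a c).
Proof. apply: tmp2; taut_solve. Qed.

Lemma iff_refl a : GLH (Iff a a).
Proof. apply: GLH_taut; taut_solve. Qed.

Lemma iff_l a b : GLH (Iff a b) -> GLH (Imp a b).
Proof. apply: tmp; taut_solve. Qed.
Lemma iff_r a b : GLH (Iff a b) -> GLH (Imp b a).
Proof. apply: tmp; taut_solve. Qed.
Lemma iffI a b : GLH (Imp a b) -> GLH (Imp b a) -> GLH (Iff a b).
Proof. apply: tmp2; taut_solve. Qed.

Lemma box_mono a b : GLH (Imp a b) -> GLH (Imp (Box a) (Box b)).
Proof. move=> /GLH_Nec_box H; exact: GLH_MP (GLH_K _ _) H. Qed.

Lemma box_cong a b : GLH (Iff a b) -> GLH (Iff (Box a) (Box b)).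
Proof. move=> H; apply: iffI; apply: box_mono; [exact: iff_l H| exact: iff_r H]. Qed.

Lemma tmp3 a b c d : taut (Imp a (Imp b (Imp c d))) -> GLH a -> GLH b -> GLH c -> GLH d.
Proof. move=> /GLH_taut H1 H2 H3 H4; exact: GLH_MP (GLH_MP (GLH_MP H1 H2) H3) H4. Qed.
Lemma tmp4 a b c d e : taut (Imp a (Imp b (Imp c (Imp d e)))) -> GLH a -> GLH b -> GLH c -> GLH d -> GLH e.
Proof. move=> /GLH_taut H1 H2 H3 H4 H5; exact: GLH_MP (GLH_MP (GLH_MP (GLH_MP H1 H2) H3) H4) H5. Qed.

Lemma next_mono a b : GLH (Imp a b) -> GLH (Imp (Next a) (Next b)).
Proof.
move=> /GLH_Nec_next H.
have H2 := GLH_Next_neg (And a (Neg b)).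
have H3 := GLH_Next_and a (Neg b).
have H4 := GLH_Next_neg b.
apply: (tmp4 _ H H2 H3 H4); taut_solve.
Qed.

Lemma next_cong a b : GLH (Iff a b) -> GLH (Iff (Next a) (Next b)).
Proof. move=> H; apply: iffI; apply: next_mono; [exact: iff_l H| exact: iff_r H]. Qed.

Definition nxt k a := iter k (@Next PV) a.

Lemma nxt_and k a b : GLH (Iff (nxt k (And a b)) (And (nxt k a) (nxt k b))).
Proof.
elim: k => [|k IH] /=; first by apply: GLH_taut; taut_solve.
apply: iff_trans (next_cong IH) _; exact: GLH_Next_and.
Qed.

Lemma nxt_neg k a : GLH (Iff (nxt k (Neg a)) (Neg (nxt k a))).
Proof.
elim: k => [|k IH] /=; first by apply: GLH_taut; taut_solve.
apply: iff_trans (next_cong IH) _.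
have := GLH_Next_neg (nxt k a); apply: tmp; taut_solve.
Qed.

Lemma nxt_box k a : GLH (Iff (nxt k (Box a)) (Box (nxt k a))).
Proof.
elim: k => [|k IH] /=; first by apply: GLH_taut; taut_solve.
apply: iff_trans (next_cong IH) _.
have := GLH_H (nxt k a); apply: tmp; taut_solve.
Qed.
End Der.

Section Tr.
Context {PV : Type}.
Fixpoint tr (a : form PV) (k : nat) : form (PV * nat) :=
  match a with
  | Var p => Var (p, k)
  | And a b => And (tr a k) (tr b k)
  | Neg a => Neg (tr a k)
  | Box a => Box (tr a k)
  | Next a => tr a k.+1
  end.
Fixpoint emb (a : form (PV * nat)) : form PV :=
  match a with
  | Var pk => nxt pk.2 (Var pk.1)
  | And a b => And (emb a) (emb b)
  | Neg a => Neg (emb a)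
  | Box a => Box (emb a)
  | Next a => Next (emb a)
  end.

Lemma tr_emb a k : GLH (Iff (nxt k a) (emb (tr a k))).
Proof.
elim: a k => [p|a IHa b IHb|a IH|a IH|a IH] k /=.
- exact: iff_refl.
- apply: iff_trans (nxt_and _ _ _) _.
  have := IHa k; have := IHb k; apply: tmp2; taut_solve.
- apply: iff_trans (nxt_neg _ _) _.
  have := IH k; apply: tmp; taut_solve.
- apply: iff_trans (nxt_box _ _) _; exact: box_cong.
- have := IH k.+1; by rewrite /nxt iterSr.
Qed.

Definition Prov (a : form (PV * nat)) := GLH (emb a).

Lemma taut_emb a : taut a -> taut (emb a).
Proof.
move=> H v [Ha Hn]; apply: (H (fun x => v (emb x))); split => * /=; [exact: Ha|exact: Hn].
Qed.
End Tr.


Section Canon.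
Context {PV : Type}.
Local Notation F := (form (PV * nat)).
Implicit Types a b c d : F.

Lemma ptaut a : taut a -> Prov a.
Proof. move=> H; apply: GLH_taut; exact: taut_emb. Qed.
Lemma pmp a b : Prov (Imp a b) -> Prov a -> Prov b.
Proof. exact: GLH_MP. Qed.
Lemma ptmp a b : taut (Imp a b) -> Prov a -> Prov b.
Proof. move=> /ptaut H; exact: pmp. Qed.
Lemma ptmp2 a b c : taut (Imp a (Imp b c)) -> Prov a -> Prov b -> Prov c.
Proof. move=> /ptaut H H1 H2; exact: pmp (pmp H H1) H2. Qed.
Lemma ptmp3 a b c d : taut (Imp a (Imp b (Imp c d))) -> Prov a -> Prov b -> Prov c -> Prov d.
Proof. move=> /ptaut H H1 H2 H3; exact: pmp (pmp (pmp H H1) H2) H3. Qed.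
Lemma pK a b : Prov (Imp (Box (Imp a b)) (Imp (Box a) (Box b))).
Proof. exact: GLH_K. Qed.
Lemma p4 a : Prov (Imp (Box a) (Box (Box a))).
Proof. exact: GLH_4. Qed.
Lemma pL a : Prov (Imp (Box (Imp (Box a) a)) (Box a)).
Proof. exact: GLH_L. Qed.
Lemma pnec a : Prov a -> Prov (Box a).
Proof. exact: GLH_Nec_box. Qed.
Lemma pimp_trans a b c : Prov (Imp a b) -> Prov (Imp b c) -> Prov (Imp a c).
Proof. apply: ptmp2; taut_solve. Qed.
Lemma pbox_mono a b : Prov (Imp a b) -> Prov (Imp (Box a) (Box b)).
Proof. move=> /pnec H; exact: pmp (pK _ _) H. Qed.

Definition Top (t : F) := Imp t t.
Fixpoint conj (t : F) (l : seq F) : F :=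
  if l is x :: l' then And x (conj t l') else Top t.

Lemma conjv (v : F -> bool) t l : bool_val v -> v (conj t l) = all v l.
Proof.
move=> [Ha Hn]; elim: l => [|x l IH] /=.
  by rewrite /Top /Imp Hn Ha Hn; case: (v t).
by rewrite Ha IH.
Qed.

Lemma allIn (v : F -> bool) l x : all v l -> In x l -> v x.
Proof. elim: l => //= y l IH /andP [H1 H2] [<-|]//; exact: IH. Qed.
Lemma allIn' (v : F -> bool) l : (forall x, In x l -> v x) -> all v l.
Proof. elim: l => //= y l IH H; rewrite H /=; [apply: IH => x Hx|]; auto. Qed.

Lemma taut_conj_sub t l m : (forall x, In x m -> In x l) -> taut (Imp (conj t l) (conj t m)).
Proof.
move=> H v Hv; move: (Hv) => [Ha Hn]; rewrite /Imp Hn Ha Hn !conjv //.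
case E: (all v l) => //=; rewrite (allIn' (l := m) (v := v)) //.
move=> x /H; exact: allIn E.
Qed.

Lemma taut_conj_in t l x : In x l -> taut (Imp (conj t l) x).
Proof.
move=> H v Hv; move: (Hv) => [Ha Hn]; rewrite /Imp Hn Ha Hn !conjv //.
case E: (all v l) => //=; by rewrite (allIn E H).
Qed.

Definition lit (b : bool) (x : F) := if b then x else Neg x.
Definition con t l := ~ Prov (Neg (conj t l)).

Lemma con_sat t l : con t l -> exists v, bool_val v /\ all v l.
Proof.
move=> H; apply: NNPP => Hn; apply: H; apply: ptaut => v Hv.
move: (Hv) => [Ha Hn']; rewrite Hn' conjv //.
case E: (all v l) => //; exfalso; apply: Hn; by exists v.
Qed.

Lemma con_split t l x : con t l -> con t (l ++ [:: x]) \/ con t (l ++ [:: Neg x]).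
Proof.
move=> H; apply: NNPP => Hn; apply: H.
have H1 : ~ con t (l ++ [:: x]) by move=> ?; apply: Hn; left.
have H2 : ~ con t (l ++ [:: Neg x]) by move=> ?; apply: Hn; right.
move/NNPP: H1 => H1; move/NNPP: H2 => H2.
apply: ptmp2 H1 H2 => v Hv; move: (Hv) => [Ha Hn']; rewrite /Imp !(Ha, Hn', conjv) //.
rewrite !all_cat /= !andbT Hn'; by case: (all v l); case: (v x).
Qed.

Lemma con_sub t l m : (forall x, In x m -> In x l) -> con t l -> con t m.
Proof.
move=> Hs H Hp; apply: H; apply: ptmp Hp.
have := taut_conj_sub t Hs => T v Hv; move: (T v Hv) (Hv) => /=.
move=> + [Ha Hn]; rewrite /Imp !(Ha, Hn) //.
by case: (v (conj t l)); case: (v (conj t m)).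
Qed.

Lemma lind t (s : seq F) l : con t l ->
  exists bs : seq bool, size bs = size s /\ con t (l ++ map (fun p => lit p.1 p.2) (zip bs s)).
Proof.
elim: s l => [|x s IH] l H.
  by exists [::]; rewrite cats0.
have [b Hb] : exists b : bool, con t (l ++ [:: lit b x]).
  by case: (con_split x H) => ?; [exists true| exists false].
have [bs [Hs Hc]] := IH _ Hb.
exists (b :: bs); split; first by rewrite /= Hs.
by rewrite /= -cat1s catA.
Qed.
End Canon.


Fixpoint subf {A : Type} (a : form A) : seq (form A) :=
  a :: match a with
       | Var _ => [::]
       | And x y => subf x ++ subf y
       | Neg x => subf x
       | Box x => subf x
       | Next x => subf x
       end.

Fixpoint nonext {A : Type} (a : form A) : Prop :=
  match a with
  | Var _ => True
  | And x y => nonext x /\ nonext y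
  | Neg x => nonext x
  | Box x => nonext x
  | Next x => False
  end.

Lemma inapp {T : Type} (x : T) l m : In x (l ++ m) -> In x l \/ In x m.
Proof. exact: List.in_app_or. Qed.
Arguments inapp {T x l m} _.
Lemma appinl {T : Type} (x : T) l m : In x l -> In x (l ++ m).
Proof. move=> H; apply: List.in_or_app; by left. Qed.
Lemma appinr {T : Type} (x : T) l m : In x m -> In x (l ++ m).
Proof. move=> H; apply: List.in_or_app; by right. Qed.

Lemma subf_self {A} (a : form A) : In a (subf a).
Proof. by case: a => *; left. Qed.

Lemma subf_trans {A} (a b c : form A) : In b (subf a) -> In c (subf b) -> In c (subf a).
Proof.
elim: a => [p|x IHx y IHy|x IH|x IH|x IH] /=.
- by case=> // <-.
- case=> [<- //|]; move=> H; have [H'|H'] := inapp H => Hc; right; [apply: appinl|apply: appinr]; auto.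
- case=> [<- //|] H Hc; right; auto.
- case=> [<- //|] H Hc; right; auto.
- case=> [<- //|] H Hc; right; auto.
Qed.

Lemma nonext_subf {A} (a b : form A) : nonext a -> In b (subf a) -> nonext b.
Proof.
elim: a => [p|x IHx y IHy|x IH|x IH|x IH] /=.
- by move=> _ [<-|].
- move=> [H1 H2] [<-|/inapp [H|H]] //=; auto.
- move=> H [<-|] //; auto.
- move=> H [<-|] //; auto.
- by [].
Qed.

Section Model.
Context {PV : Type} (psi0 : form (PV * nat)).
Local Notation F := (form (PV * nat)).
Local Notation Sg := (subf psi0).
Local Notation t := psi0.
Implicit Types a c d : F.

Lemma clos a c : In a Sg -> In c (subf a) -> In c Sg.
Proof. exact: subf_trans. Qed.
Lemma closAnd a b : In (And a b) Sg -> In a Sg /\ In b Sg.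
Proof. move=> H; split; apply: (clos H) => /=; right; apply/List.in_or_app; [left|right]; exact: subf_self. Qed.
Lemma closNeg a : In (Neg a) Sg -> In a Sg.
Proof. move=> H; apply: (clos H) => /=; right; exact: subf_self. Qed.
Lemma closBox a : In (Box a) Sg -> In a Sg.
Proof. move=> H; apply: (clos H) => /=; right; exact: subf_self. Qed.

Definition lits (X : seq bool) := map (fun p => lit p.1 p.2) (zip X Sg).

Definition val (X : seq bool) : F -> bool :=
  match excluded_middle_informative (exists v, bool_val v /\ all v (lits X)) with
  | left H => proj1_sig (constructive_indefinite_description _ H)
  | right _ => fun _ => false
  end.

Lemma valP X : con t (lits X) -> bool_val (val X) /\ all (val X) (lits X).
Proof.
move=> /con_sat H; rewrite /val; case: excluded_middle_informative => // H'.
exact: proj2_sig (constructive_indefinite_description _ H').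
Qed.

Lemma zip_in (X : seq bool) a : size X = size Sg -> In a Sg -> exists b, In (b, a) (zip X Sg).
Proof.
move: (Sg) X => s; elim: s => [|y s IH] [|x X] //= [Hs] [<-|Ha].
  by exists x; left.
have [b Hb] := IH _ Hs Ha; exists b; by right.
Qed.

Lemma lit_in (X : seq bool) b a : In (b, a) (zip X Sg) -> In (lit b a) (lits X).
Proof. move=> H; exact: (List.in_map (fun p => lit p.1 p.2) _ _ H). Qed.

Lemma lit_val (v : F -> bool) b a : bool_val v -> v (lit b a) -> b = v a.
Proof. by move=> [_ Hn]; case: b => /= H; [rewrite H | move: H; rewrite Hn; case: (v a)]. Qed.

Lemma agree (X : seq bool) u w a : size X = size Sg -> bool_val u -> bool_val w ->
  all u (lits X) -> all w (lits X) -> In a Sg -> u a = w a.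
Proof.
move=> Hs Hu Hw Au Aw Ha; have [b Hb] := zip_in Hs Ha.
have /lit_in Hl := Hb.
by rewrite -(lit_val Hu (allIn Au Hl)) -(lit_val Hw (allIn Aw Hl)).
Qed.

Lemma val_lit (X : seq bool) a : con t (lits X) -> size X = size Sg -> In a Sg ->
  In (lit (val X a) a) (lits X).
Proof.
move=> Hc Hs Ha; have [b Hb] := zip_in Hs Ha; have [Hv Hall] := valP Hc.
have /lit_in Hl := Hb; by rewrite -(lit_val Hv (allIn Hall Hl)).
Qed.

Local Notation W0 := ((size Sg).-tuple bool).

Definition Rp (X Y : W0) : Prop :=
  con t (lits X) /\ con t (lits Y) /\
  (forall b, In (Box b) Sg -> val X (Box b) -> val Y b /\ val Y (Box b)) /\
  (exists b, In (Box b) Sg /\ val Y (Box b) /\ ~~ val X (Box b)).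

Definition R0 (X Y : W0) : bool := asb (Rp X Y).

Lemma R0_trans : transitive R0.
Proof.
move=> Y X Z /asbP [H1 [H2 [H3 [b [Hb1 [Hb2 Hb3]]]]]] /asbP [_ [H5 [H6 _]]].
apply/asbP; split => //; split => //; split.
  move=> c Hc Hxc; have [_ Hy] := H3 c Hc Hxc; exact: H6 c Hc Hy.
exists b; split => //; split => //; by case: (H6 b Hb1 Hb2).
Qed.

Lemma R0_irr : irreflexive R0.
Proof. by move=> X; apply/negP => /asbP [_ [_ [_ [b [_ [-> //]]]]]]. Qed.

Fixpoint boxlist (v : F -> bool) (s : seq F) : seq F :=
  if s is x :: s' then
    (if x is Box b then (if v x then [:: b] else [::]) else [::]) ++ boxlist v s'
  else [::].

Lemma In_boxlist v s b : In b (boxlist v s) <-> In (Box b) s /\ v (Box b).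
Proof.
elim: s => [|x s IH] /=; first by split => // [[]].
split.
- move/inapp => [H|/IH [H1 H2]]; last by split; auto.
  case: x H => // y; case E: (v (Box y)) => /= H; last by [].
  by case: H => // Hy; subst; split; auto.
- move=> [[Hx|H1] H2]; [subst x; apply: appinl; rewrite /= H2; by left | apply: appinr; apply/IH; auto].
Qed.

Lemma ptmp4 a b c d e : taut (Imp a (Imp b (Imp c (Imp d e)))) -> Prov a -> Prov b -> Prov c -> Prov d -> Prov e.
Proof. move=> /ptaut H H1 H2 H3 H4; exact: pmp (pmp (pmp (pmp H H1) H2) H3) H4. Qed.

Lemma box_conj (D : seq F) : Prov (Imp (conj t (map Box D)) (Box (conj t D))).
Proof.
elim: D => [|x D IH] /=.
  have H : Prov (Box (Top t)) by apply: pnec; apply: ptaut; rewrite /Top; taut_solve.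
  apply: ptmp H; rewrite /Top; taut_solve.
have A1 : Prov (Box (Imp x (Imp (conj t D) (And x (conj t D))))) by apply: pnec; apply: ptaut; taut_solve.
have A2 := pK x (Imp (conj t D) (And x (conj t D))).
have A3 := pK (conj t D) (And x (conj t D)).
apply: (ptmp4 _ A1 A2 A3 IH); taut_solve.
Qed.

Lemma conj_map_mono (g f : F -> F) (L : seq F) : (forall x, Prov (Imp (g x) (f x))) ->
  Prov (Imp (conj t (map g L)) (conj t (map f L))).
Proof.
move=> Hf; elim: L => [|x L IH] /=.
  by apply: ptaut; rewrite /Top; taut_solve.
have := Hf x; move: IH; apply: ptmp2; taut_solve.
Qed.

Lemma conj_cat_taut (L M : seq F) : taut (Iff (conj t (L ++ M)) (And (conj t L) (conj t M))).
Proof.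
move=> v Hv; move: (Hv) => [Ha Hn]; rewrite /Iff /Imp !(Ha, Hn, conjv) // all_cat.
by case: (all v L); case: (all v M).
Qed.

Lemma box_wit (X : W0) a : con t (lits X) -> In (Box a) Sg -> val X (Box a) = false ->
  exists Y : W0, R0 X Y /\ val Y a = false.
Proof.
move=> HX Ha Hva.
have HsX : size X = size Sg by rewrite size_tuple.
set B := boxlist (val X) Sg.
set D := B ++ map Box B.
set Dl := D ++ [:: Box a; Neg a].
have HD : con t Dl.
  move=> HP.
  have S1 : Prov (Imp (conj t D) (Imp (Box a) a)).
    move: HP; have := conj_cat_taut D [:: Box a; Neg a]; move/ptaut; apply: ptmp2.
    move=> v Hv; move: (Hv) => [Ha' Hn]; rewrite /Iff /Imp !(Ha', Hn, conjv) //=.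
    rewrite /Dl !all_cat /= Hn.
    by case: (all v B); case: (all v _); case: (v (Box a)); case: (v a).
  have S2 := pbox_mono S1.
  have S3 := box_conj D.
  have S4 : Prov (Imp (conj t (map Box B)) (conj t (map Box D))).
    rewrite /D map_cat.
    have T1 : Prov (Imp (conj t (map Box B)) (conj t (map Box (map Box B)))).
      rewrite -map_comp; exact: (conj_map_mono (g := Box) (f := fun x => Box (Box x)) B (@p4 PV)).
    have T2 := ptaut (conj_cat_taut (map Box B) (map Box (map Box B))).
    move: T1 T2; apply: ptmp2; taut_solve.
  have S5 : Prov (Imp (conj t (lits X)) (conj t (map Box B))).
    apply: ptaut; apply: taut_conj_sub => x /List.in_map_iff [b [<- /In_boxlist [Hb1 Hb2]]].
    by have := val_lit HX HsX Hb1; rewrite Hb2.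
  have S6 : Prov (Imp (conj t (lits X)) (Neg (Box a))).
    by apply: ptaut; apply: taut_conj_in; have := val_lit HX HsX Ha; rewrite Hva.
  have S7 := pL a.
  have S8 := pimp_trans (pimp_trans (pimp_trans (pimp_trans S5 S4) S3) S2) S7.
  apply: HX; move: S8 S6; apply: ptmp2; taut_solve.
have [bs [Hs Hc]] := lind Sg HD.
have Hs' : size bs == size Sg by apply/eqP.
pose Y : W0 := Tuple Hs'.
have HY : con t (lits Y).
  apply: con_sub Hc => x Hx; by apply: appinr.
have [w [Hw Hall]] := con_sat Hc.
have [Hv Hvall] := valP HY.
have EY : forall c, In c Sg -> val Y c = w c.
  move=> c Hc'; apply: (agree (size_tuple Y) Hv Hw Hvall _ Hc').
  by move: Hall; rewrite all_cat => /andP [].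
have WD : forall c, In c Dl -> w c.
  move=> c Hc'; apply: (allIn Hall); by apply: appinl.
exists Y; split.
  apply/asbP; split => //; split => //; split.
    move=> b Hb Hxb.
    have HbB : In b B by apply/In_boxlist.
    rewrite !EY //; last exact: closBox.
    split; apply: WD; apply/List.in_or_app; left; apply/List.in_or_app; [left|right] => //.
    exact: List.in_map.
  exists a; split => //; rewrite Hva EY //; split => //.
  apply: WD; apply/List.in_or_app; right; by left.
rewrite EY; last exact: closBox.
have HN : In (Neg a) Dl by apply: appinr; right; left.
have := WD _ HN; case: Hw => _ ->; by case: (w a).
Qed.

Definition V0 (pk : PV * nat) (X : W0) : bool := val X (Var pk).

Lemma truth (X : W0) a : nonext psi0 -> con t (lits X) -> In a Sg ->
  (ksat R0 id V0 X a <-> val X a).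
Proof.
move=> Hne; elim: a X => [p|x IHx y IHy|x IH|x IH|x IH] X HX Ha /=.
- by [].
- have [Hv _] := valP HX; case: (closAnd Ha) => H1 H2.
  rewrite (proj1 Hv) IHx // IHy //; by split => [[-> ->]|/andP].
- have [Hv _] := valP HX; rewrite (proj2 Hv) IH //; last exact: closNeg.
  by case: (val X x); split => // H; case: H.
- split.
  + move=> H; apply: NNPP => Hn.
    have Hf : val X (Box x) = false by move: Hn; case: (val X (Box x)).
    have [Y [HR HY]] := box_wit HX Ha Hf.
    have [_ [HcY _]] := (iffLR (asbP _) HR).
    have := H Y HR; rewrite IH //; last exact: closBox.
    by rewrite HY.
  + move=> Hb Y /asbP [_ [HcY [H3 _]]]; rewrite IH //; last exact: closBox.
    by case: (H3 x Ha Hb).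
- by have := nonext_subf Hne Ha.
Qed.

Lemma countermodel : nonext psi0 -> ~ Prov psi0 ->
  exists X : W0, ~ ksat R0 id V0 X psi0.
Proof.
move=> Hne HP.
have HD : con t [:: Neg psi0].
  move=> H; apply: HP; move: H; apply: ptmp; rewrite /=/Top; taut_solve.
have [bs [Hs Hc]] := lind Sg HD.
have Hs' : size bs == size Sg by apply/eqP.
pose Y : W0 := Tuple Hs'.
have HY : con t (lits Y).
  apply: con_sub Hc => x Hx; by apply: appinr.
have [w [Hw Hall]] := con_sat Hc.
exists Y; rewrite truth //; last exact: subf_self.
rewrite (agree (size_tuple Y) (proj1 (valP HY)) Hw (proj2 (valP HY)) _ (subf_self _)); last first.
  by move: Hall; rewrite all_cat => /andP [].
move: Hall => /andP [+ _]; case: Hw => _ ->; by case: (w psi0).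
Qed.
End Model.


Lemma wf_max (W : finType) (R : rel W) (P : W -> Prop) : transitive R -> irreflexive R ->
  forall u, ~ P u -> exists m, (m = u \/ R u m) /\ ~ P m /\ forall z, R m z -> P z.
Proof.
move=> Rt Ri.
suff H : forall n u, #|[set z | R u z]| < n -> ~ P u ->
   exists m, (m = u \/ R u m) /\ ~ P m /\ forall z, R m z -> P z.
  move=> u; exact: H.
elim=> [//|n IH] u Hn Hu.
case: (classic (forall z, R u z -> P z)) => Hall.
  by exists u; split; [left|].
have [z Hz] : exists z, R u z /\ ~ P z.
  apply: NNPP => Hne; apply: Hall => z Rz; apply: NNPP => Pz; apply: Hne; by exists z.
case: Hz => Rz Pz.
have Hlt : #|[set y | R z y]| < #|[set y | R u y]|.
  apply: proper_card; apply/properP; split.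
    by apply/subsetP => y; rewrite !inE => /(Rt _ _ _ Rz).
  by exists z; rewrite !inE ?Rz // Ri.
have [m [Hm1 [Hm2 Hm3]]] := IH z (leq_trans Hlt Hn) Pz.
exists m; split => //; right; case: Hm1 => [->//|]; exact: Rt.
Qed.

Lemma asbT (P : Prop) : P -> asb P = true.
Proof. by move/asbP. Qed.
Lemma asbF (P : Prop) : ~ P -> asb P = false.
Proof. by rewrite /asb; case: excluded_middle_informative. Qed.
Lemma asb_and (A B : Prop) : asb (A /\ B) = asb A && asb B.
Proof.
case: (classic A) => HA; case: (classic B) => HB.
- by rewrite !asbT.
- by rewrite (asbT HA) (asbF HB) asbF // => [[]].
- by rewrite (asbF HA) asbF // => [[]].
- by rewrite (asbF HA) asbF // => [[]].
Qed.
Lemma asb_not (A : Prop) : asb (~ A) = ~~ asb A.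
Proof.
case: (classic A) => HA; first by rewrite (asbT HA) asbF.
by rewrite (asbF HA) asbT.
Qed.

Section Sound.
Context {PV : Type}.

Lemma impI (W : Type) R f V (w : W) (a b : form PV) :
  (ksat R f V w a -> ksat R f V w b) -> ksat R f V w (Imp a b).
Proof. by move=> H /= [Ha Hb]; apply: Hb; apply: H. Qed.
Lemma impE (W : Type) R f V (w : W) (a b : form PV) :
  ksat R f V w (Imp a b) -> ksat R f V w a -> ksat R f V w b.
Proof. by move=> /= H Ha; apply: NNPP => Hb; apply: H. Qed.
Lemma iffI' (W : Type) R f V (w : W) (a b : form PV) :
  (ksat R f V w a <-> ksat R f V w b) -> ksat R f V w (Iff a b).
Proof. by move=> [H1 H2]; split; apply: impI. Qed.

Lemma soundness (phi : form PV) : GLH phi ->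
  forall (W : finType) (R : rel W) (f : W -> W), fin_inv_dyn_GL_frame R f -> kvalid R f phi.
Proof.
move=> H W R f [_ [Rt [Ri [[g fg gf] Rf]]]].
elim: H => {phi}.
- move=> phi Ht V w; apply/asbP.
  apply: (Ht (fun a => asb (ksat R f V w a))); split => * /=; [exact: asb_and| exact: asb_not].
- move=> a b V w; apply: impI => H1; apply: impI => H2 v Rv.
  exact: (impE (H1 v Rv) (H2 v Rv)).
- move=> a V w; apply: impI => H1 v Rv u Ru; apply: H1; exact: Rt Ru.
- move=> a V w; apply: impI => H1; apply: NNPP => H2.
  have [v [Rv Hv]] : exists v, R w v /\ ~ ksat R f V v a.
    apply: NNPP => Hne; apply: H2 => v Rv; apply: NNPP => Hv; apply: Hne; by exists v.
  have [m [Hm1 [Hm2 Hm3]]] := wf_max (P := fun x => ksat R f V x a) Rt Ri Hv.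
  have Rm : R w m by case: Hm1 => [->|]; [|exact: Rt].
  have HH : ksat R f V m (Imp (Box a) a) := H1 m Rm. apply: Hm2; apply: (impE HH) => z Rz; exact: Hm3.
- move=> a V w; apply: iffI' => /=; split => H1 H2; apply: H1 => //.
- move=> a b V w; apply: iffI' => /=; tauto.
- move=> a V w; apply: iffI' => /=; split.
  + move=> H u Ru; have := H (g u); rewrite gf; apply; by rewrite Rf gf.
  + move=> H v Rv; apply: H; by rewrite -Rf.
- move=> a b _ IH1 _ IH2 V w; exact: impE (IH1 V w) (IH2 V w).
- move=> a _ IH V w v _; exact: IH.
- move=> a _ IH V w; exact: IH.
Qed.
End Sound.


Fixpoint nd {A} (a : form A) : nat :=
  match a with
  | Var _ => 0
  | And x y => maxn (nd x) (nd y)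
  | Neg x => nd x
  | Box x => nd x
  | Next x => (nd x).+1
  end.

Lemma nonext_tr {PV} (a : form PV) k : nonext (tr a k).
Proof. by elim: a k => //= x IHx y IHy k; split. Qed.

Section Prod.
Context {PV : Type} (W0 : finType) (R0 : rel W0) (V0 : PV * nat -> W0 -> bool) (N : nat).
Definition Rp' (p q : W0 * 'I_N.+1) : bool := R0 p.1 q.1 && (p.2 == q.2).
Definition fp (p : W0 * 'I_N.+1) : W0 * 'I_N.+1 := (p.1, ordS p.2).
Definition Vp (x : PV) (p : W0 * 'I_N.+1) : bool := V0 (x, nat_of_ord p.2) p.1.

Lemma prodsat (a : form PV) (i : 'I_N.+1) (x : W0) : i + nd a < N.+1 ->
  (ksat Rp' fp Vp (x, i) a <-> ksat R0 id V0 x (tr a i)).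
Proof.
elim: a i x => [p|a IHa b IHb|a IH|a IH|a IH] i x /= Hi.
- by [].
- rewrite IHa ?IHb //; apply: leq_ltn_trans Hi; rewrite leq_add2l ?leq_maxl ?leq_maxr //.
- by rewrite IH.
- split.
  + move=> H y Ry; rewrite -IH //; apply: H; by rewrite /Rp' /= Ry eqxx.
  + move=> H [y j] /andP [/= Ry /eqP <-]; rewrite IH //; exact: H.
- rewrite /fp /= IH /=.
  + have -> : (i.+1 %% N.+1) = i.+1 by rewrite modn_small // -addn1; apply: leq_ltn_trans Hi; rewrite leq_add2l.
    by [].
  + by rewrite modn_small ?addSnnS // -addn1; apply: leq_ltn_trans Hi; rewrite leq_add2l.
Qed.
End Prod.

Lemma completeness {PV : Type} (phi : form PV) :
  (forall (W : finType) (R : rel W) (f : W -> W),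
       fin_inv_dyn_GL_frame R f -> kvalid R f phi) -> GLH phi.
Proof.
move=> Hv; apply: NNPP => Hn.
set psi0 := tr phi 0.
have HP : ~ Prov psi0.
  move=> HP; apply: Hn; have := tr_emb phi 0; move/iff_r => H; exact: GLH_MP H HP.
have [X HX] := countermodel (nonext_tr phi 0) HP.
set W0 := ((size (subf psi0)).-tuple bool) in X HX.
pose N := nd phi.
have Hfr : fin_inv_dyn_GL_frame (Rp' (R0 (psi0 := psi0)) (N := N)) (fp (W0 := W0) (N := N)).
  split; first by apply/card_gt0P; exists (X, ord0).
  split.
    move=> [y j] [x i] [z k]; rewrite /Rp' /= => /andP [R1 /eqP ->] /andP [R2 /eqP ->].
    by rewrite (R0_trans R1 R2) eqxx.
  split; first by move=> [x i]; rewrite /Rp' /= R0_irr.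
  split.
    exists (fun p => (p.1, ord_pred p.2)) => [[x i]|[x i]]; by rewrite /fp /= ?ordSK ?ord_predK.
  move=> [x i] [y j]; by rewrite /Rp' /fp /= (inj_eq (@ordS_inj _)).
have := Hv _ _ _ Hfr (Vp (V0 (psi0 := psi0)) (N := N)) (X, ord0).
rewrite prodsat; first exact: HX.
by rewrite /= add0n ltnS.
Qed.


Lemma dsem_ksat {PV : Type} (X : finType) (op : pred {set X}) (f : X -> X) (R : rel X)
  (nu : PV -> {set X}) (V : PV -> X -> bool) :
  (forall A, derived op A = [set x | [exists y, (y \in A) && R x y]]) ->
  (forall p x, (x \in nu p) = V p x) ->
  forall a x, x \in dsem op f nu a <-> ksat R f V x a.
Proof.
move=> Hd HV; elim=> [p|a IHa b IHb|a IH|a IH|a IH] x /=.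
- by rewrite HV.
- by rewrite inE -IHa -IHb; split => [/andP|[-> ->]].
- rewrite inE -IH; by case: (x \in dsem op f nu a); split => // H; case: H.
- rewrite Hd !inE; split.
  + move=> /existsPn H y Ry; apply/IH; move: (H y); by rewrite Ry inE andbT negbK.
  + move=> H; apply/existsPn => y; rewrite inE; case Ry: (R x y); rewrite ?andbF // andbT negbK.
    by apply/IH; apply: H.
- by rewrite inE IH.
Qed.

Section Top1.
Context (X : finType) (op : pred {set X}) (f : X -> X).
Hypothesis Htop : is_topology op.
Hypothesis Hsc : scattered op.
Hypothesis Hh : homeomorphism op f.

Definition Rt (x y : X) : bool := (x != y) && [forall U : {set X}, (op U && (x \in U)) ==> (y \in U)].

Lemma Rt_derived A : derived op A = [set x | [exists y, (y \in A) && Rt x y]].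
Proof.
case: Htop => [H0 [HT [HI HU]]].
apply/setP => x; rewrite /derived /tclosure !inE; apply/idP/idP.
- move/forallP => H.
  set Ux := \bigcap_(U | op U && (x \in U)) U.
  have Uo : op Ux by apply: (big_ind (fun U => op U)) => // U /andP [].
  have xU : x \in Ux by apply/bigcapP => U /andP [].
  have := H Ux; rewrite Uo xU /= => /existsP [y /andP [yU]]; rewrite !inE => /andP [yx yA].
  apply/existsP; exists y; rewrite yA /Rt eq_sym yx /=.
  apply/forallP => U; apply/implyP => HUx; by move/bigcapP: yU; apply.
- move=> /existsP [y /andP [yA /andP [xy /forallP HUy]]].
  apply/forallP => U; apply/implyP => HU'; apply/existsP; exists y.
  by rewrite (implyP (HUy U) HU') !inE yA eq_sym xy.
Qed.

Lemma Rt_antisym x y : Rt x y -> Rt y x -> False.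
Proof.
move=> H1 H2.
have := Hsc (S := [set x; y]); rewrite Rt_derived.
have Hs : [set x; y] \subset [set x0 | [exists y0, (y0 \in [set x; y]) && Rt x0 y0]].
  apply/subsetP => z; rewrite !inE => /orP [/eqP ->|/eqP ->]; apply/existsP.
  - by exists y; rewrite !inE eqxx orbT.
  - by exists x; rewrite !inE eqxx.
move=> /(_ Hs) /setP /(_ x); by rewrite !inE eqxx.
Qed.

Lemma top_frame : (0 < #|X|)%N -> fin_inv_dyn_GL_frame Rt f.
Proof.
move=> Hn; split => //; split.
  move=> y x z H1 H2; move: (H1) (H2) => /andP [xy /forallP Hxy] /andP [yz /forallP Hyz].
  apply/andP; split.
    apply/negP => /eqP Exz; subst z; exact: Rt_antisym H1 H2.
  apply/forallP => U; apply/implyP => HU; apply: (implyP (Hyz U)).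
  by rewrite (implyP (Hxy U) HU) andbT; case/andP: HU.
split; first by move=> x; rewrite /Rt eqxx.
case: Hh => [Hb [Hpre Him]]; split => //.
have fi : injective f by apply: bij_inj.
move=> x y; rewrite /Rt (inj_eq fi); congr (_ && _).
apply/forallP/forallP => H U; apply/implyP => /andP [oU xU].
- have := implyP (H (f @^-1: U)); rewrite inE Hpre // inE; by apply.
- have := implyP (H (f @: U)); rewrite Him // mem_imset // => /(_ xU).
  by rewrite mem_imset.
Qed.
End Top1.

Section Top2.
Context (W : finType) (R : rel W) (f : W -> W).
Hypothesis Hfr : fin_inv_dyn_GL_frame R f.

Definition opR (U : {set W}) : bool := [forall x, [forall y, (x \in U) && R x y ==> (y \in U)]].

Lemma opRP (U : {set W}) : reflect (forall x y, x \in U -> R x y -> y \in U) (opR U).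
Proof.
apply: (iffP forallP) => H.
  move=> x y xU Rxy; have /forallP /(_ y) /implyP := H x; apply; by rewrite xU Rxy.
move=> x; apply/forallP => y; apply/implyP => /andP [xU Rxy]; exact: H xU Rxy.
Qed.

Lemma opR_top : is_topology opR.
Proof.
split; first by apply/opRP => x y; rewrite inE.
split; first by apply/opRP => x y; rewrite inE.
split.
  move=> A B /opRP HA /opRP HB; apply/opRP => x y; rewrite !inE => /andP [xA xB] Rxy.
  by rewrite (HA x y) ?(HB x y).
move=> F HF; apply/opRP => x y /bigcupP [A AF xA] Rxy; apply/bigcupP; exists A => //.
by move/opRP: (HF A AF) => /(_ x y xA Rxy).
Qed.

Lemma opR_derived A : derived opR A = [set x | [exists y, (y \in A) && R x y]].
Proof.
case: Hfr => [_ [Rt' [Ri _]]].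
apply/setP => x; rewrite /derived /tclosure !inE; apply/idP/idP.
- move/forallP => H.
  set U := x |: [set y | R x y].
  have Uo : opR U.
    apply/opRP => z y; rewrite !inE => /orP [/eqP ->|Rxz] Rzy; rewrite ?Rzy ?(Rt' _ _ _ Rxz Rzy) orbT //.
  have := H U; rewrite Uo !inE eqxx /= => /existsP [y /andP [yU]]; rewrite !inE => /andP [yx yA].
  apply/existsP; exists y; rewrite yA /=.
  by move: yU; rewrite !inE (negbTE yx).
- move=> /existsP [y /andP [yA Rxy]].
  apply/forallP => U; apply/implyP => /andP [/opRP oU xU]; apply/existsP; exists y.
  rewrite (oU x y) // !inE yA andbT; apply/negP => /eqP Eyx; subst y.
  by rewrite Ri in Rxy.
Qed.

Lemma opR_scattered : scattered opR.
Proof.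
case: Hfr => [_ [Rt' [Ri _]]].
move=> S; rewrite opR_derived => Hs; apply/eqP; apply: contraT => /set0Pn [x xS].
have Hx : ~ (x \notin S) by rewrite xS.
have [m [_ [Hm1 Hm2]]] := @wf_max W R (fun z => z \notin S) Rt' Ri x Hx.
have mS : m \in S by apply: contraT => H; case: Hm1.
move/subsetP: Hs => /(_ m mS); rewrite inE => /existsP [y /andP [yS Rmy]].
by move: (Hm2 y Rmy); rewrite yS.
Qed.

Lemma opR_homeo : homeomorphism opR f.
Proof.
case: Hfr => [_ [_ [_ [[g fg gf] Rf]]]].
split; first by exists g.
split.
  move=> U /opRP oU; apply/opRP => x y; rewrite !inE => xU Rxy.
  by apply: (oU (f x)); rewrite // -Rf.
move=> U /opRP oU; apply/opRP => x y /imsetP [u uU ->] Rxy.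
rewrite -(gf y); apply: imset_f; apply: (oU u) => //.
by rewrite Rf gf.
Qed.
End Top2.

Lemma ii_iii {PV : Type} (phi : form PV) :
  (forall (W : finType) (R : rel W) (f : W -> W),
       fin_inv_dyn_GL_frame R f -> kvalid R f phi) ->
  (forall (X : finType) (op : pred {set X}) (f : X -> X),
       is_topology op -> scattered op -> homeomorphism op f -> dvalid op f phi).
Proof.
move=> H X op f Ht Hs Hh nu; apply/setP => x; rewrite inE.
have Hn : (0 < #|X|)%N by apply/card_gt0P; exists x.
have Hfr := top_frame Ht Hs Hh Hn.
have Hd := Rt_derived Ht.
have HD := @dsem_ksat PV X op f (Rt op) nu (fun p y => y \in nu p) Hd (fun p y => erefl).
apply/HD; exact: H Hfr _ _.
Qed.

Lemma iii_ii {PV : Type} (phi : form PV) :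
  (forall (X : finType) (op : pred {set X}) (f : X -> X),
       is_topology op -> scattered op -> homeomorphism op f -> dvalid op f phi) ->
  (forall (W : finType) (R : rel W) (f : W -> W),
       fin_inv_dyn_GL_frame R f -> kvalid R f phi).
Proof.
move=> H W R f Hfr V w.
have := H W (opR R) f (opR_top R) (opR_scattered Hfr) (opR_homeo Hfr) (fun p => [set y | V p y]).
move/setP => /(_ w); rewrite inE.
have HV : forall p y, (y \in [set y | V p y]) = V p y by move=> p y; rewrite inE.
have HD := @dsem_ksat PV W (opR R) f R (fun p => [set y | V p y]) V (opR_derived Hfr) HV.
by move/HD.
Qed.


Theorem mainTheorem10 (PV : Type) (PV_nonempty : inhabited PV) (phi : form PV) :
  (GLH phi <->
   (forall (W : finType) (R : rel W) (f : W -> W),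
       fin_inv_dyn_GL_frame R f -> kvalid R f phi)) /\
  ((forall (W : finType) (R : rel W) (f : W -> W),
       fin_inv_dyn_GL_frame R f -> kvalid R f phi) <->
   (forall (X : finType) (op : pred {set X}) (f : X -> X),
       is_topology op -> scattered op -> homeomorphism op f -> dvalid op f phi)).
Proof.
split; split.
- move=> H W R f Hf; exact: soundness H W R f Hf.
- exact: completeness.
- exact: ii_iii.
- exact: iii_ii.
Qed.
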